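(* Let $(A,m,\Delta)$ be an infinitesimal multiplier bialgebra (see context), and write $[x,y]=xy-yx$ for $x,y\in A$. For $a\in A$ define linear maps $\delta_a,\zeta^a:A\to A\otimes A$ by $$\delta_a(x)=\Delta(x)(a\otimes 1)-\tau\big(\Delta(x)(a\otimes 1)\big),\qquad \zeta^a(x)=(1\otimes a)\Delta(x)-\tau\big((1\otimes a)\Delta(x)\big),$$ where $\tau$ is the flip $u\otimes v\mapsto v\otimes u$. Then for all $a,x,y\in A$, $$\delta_a[x,y]=x\cdot\delta_a(y)-y\cdot\delta_a(x)+\underline{\mathbb B}(a)(x\otimes y)-\underline{\mathbb B}(a)(y\otimes x),$$ $$\zeta^a[x,y]=x\cdot\zeta^a(y)-y\cdot\zeta^a(x)+\overline{\mathbb B}(a)(x\otimes y)-\overline{\mathbb B}(a)(y\otimes x),$$ where $x\cdot(u\otimes v)=[x,u]\otimes v+u\otimes[x,v]$ for $u,v\in A$ (extended linearly), and $\underline{\mathbb B}(a),\overline{\mathbb B}(a)$ are the linear endomorphisms of $A\otimes A$ given by $$\underline{\mathbb B}(a)(x\otimes y)=(x\otimes 1)\,\tau\big(\Delta(y)(a\otimes 1)\big)-\tau\big(\Delta(y)(ax\otimes 1)\big)+(1\otimes y)\big(\Delta(x)(a\otimes 1)\big)-\Delta(x)(ay\otimes 1),$$ $$\overline{\mathbb B}(a)(x\otimes y)=\tau\big((1\otimes xa)\Delta(y)\big)-\tau\big(((1\otimes a)\Delta(y))(x\otimes 1)\big)+(1\otimes ya)\Delta(x)-\big((1\otimes a)\Delta(x)\big)(y\otimes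 1).$$
   Context: All algebras are associative $\mathbb C$-algebras, not necessarily unital, whose product is non-degenerate (if $ab=0$ for all $b$ then $a=0$, and if $ba=0$ for all $b$ then $a=0$). For such an algebra $B$, a left multiplier is a linear $\lambda:B\to B$ with $\lambda(bc)=\lambda(b)c$, a right multiplier is a linear $\rho:B\to B$ with $\rho(bc)=b\rho(c)$, and the multiplier algebra $M(B)$ consists of pairs $(\lambda,\rho)$ of a left and a right multiplier with $b\lambda(c)=\rho(b)c$ for all $b,c$; its product is $(\lambda,\rho)(\lambda',\rho')=(\lambda\circ\lambda',\rho'\circ\rho)$, it has identity $(\mathrm{id},\mathrm{id})$, and $B$ embeds in $M(B)$ via $b\mapsto(\lambda_b,\rho_b)$, $\lambda_b(c)=bc$, $\rho_b(c)=cb$. A coproduct on $A$ is a linear map $\Delta:A\to M(A\otimes A)$ such that (a) $\Delta(b)(a\otimes 1)\in A\otimes A$ and $(1\otimes b)\Delta(a)\in A\otimes A$ for all $a,b\in A$, and (b) with $T_3(a\otimes b)=\Delta(b)(a\otimes 1)$ and $T_4(a\otimes b)=(1\otimes b)\Delta(a)$, one has $(\iota\otimes T_4)\circ(T_3\otimes\iota)=(T_3\otimes\iota)\circ(\iota\otimes T_4)$ on $A\otimes A\otimes A$ ($\iota$ the identity). An infinitesimal multiplier bialgebra is a triple $(A,m,\Delta)$ with $(A,m)$ an associative algebra with non-degenerate product, $\Delta$ a coproduct on $A$, and $\Delta(ab)=\Delta(a)(1\otimes b)+(a\otimes 1)\Delta(b)$ in $M(A\otimes A)$ for all $a,b\in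 A$. Expressions such as $(x\otimes 1)\,\tau(w)$ or $w(y\otimes 1)$ with $w\in A\otimes A$ are products in the algebra $A\otimes A$. The pair $\mathbb B(a)=(\underline{\mathbb B}(a),\overline{\mathbb B}(a))$ is called the bibalanceator of $A$. *)

(* Defs.v *)
From mathcomp Require Import all_boot all_algebra.
From mathcomp Require Import complex Rstruct.
From Stdlib Require Import Reals ClassicalEpsilon.

Set Implicit Arguments.
Unset Strict Implicit.
Unset Printing Implicit Defensive.
Import GRing.Theory.
Local Open Scope ring_scope.

Definition CC : fieldType := complex Rdefinitions.R.

Section Generic.
Variable K : fieldType.

Definition lin (U W : lmodType K) (f : U -> W) : Prop :=
  forall (k : K) (u v : U), f (k *: u + v) = k *: f u + f v.

Definition bilin (U V W : lmodType K) (f : U -> V -> W) : Prop :=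
  (forall u, lin (f u)) /\ (forall v, lin (fun u => f u v)).

Definition trilin (U V X W : lmodType K) (f : U -> V -> X -> W) : Prop :=
  (forall u v, lin (f u v)) /\ (forall u x, lin (fun v => f u v x))
  /\ (forall v x, lin (fun u => f u v x)).

Definition is_nd_algebra (A : lmodType K) (mul : A -> A -> A) : Prop :=
  bilin mul
  /\ (forall a b c, mul (mul a b) c = mul a (mul b c))
  /\ (forall a, (forall b, mul a b = 0) -> a = 0)
  /\ (forall a, (forall b, mul b a = 0) -> a = 0).

Definition is_tensor (U V T : lmodType K) (t : U -> V -> T) : Prop :=
  bilin t /\
  forall (W : lmodType K) (f : U -> V -> W), bilin f ->
    exists g : T -> W, [/\ lin g, (forall u v, g (t u v) = f u v) &
      (forall g' : T -> W, lin g' -> (forall u v, g' (t u v) = f u v) ->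
         forall x, g' x = g x)].

Definition is_tensor3 (U V X T : lmodType K) (t : U -> V -> X -> T) : Prop :=
  trilin t /\
  forall (W : lmodType K) (f : U -> V -> X -> W), trilin f ->
    exists g : T -> W, [/\ lin g, (forall u v x, g (t u v x) = f u v x) &
      (forall g' : T -> W, lin g' -> (forall u v x, g' (t u v x) = f u v x) ->
         forall y, g' y = g y)].

(* The linear map T -> W induced by a bilinear f (when t is a tensor
   product and f is bilinear; chosen by classical choice). *)
Definition tlift (U V T W : lmodType K) (t : U -> V -> T) (f : U -> V -> W)
  : T -> W :=
  epsilon (inhabits (fun _ : T => 0 : W))
    (fun g => lin g /\ forall u v, g (t u v) = f u v).

Definition tlift3 (U V X T W : lmodType K) (t : U -> V -> X -> T)
  (f : U -> V -> X -> W) : T -> W :=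
  epsilon (inhabits (fun _ : T => 0 : W))
    (fun g => lin g /\ forall u v x, g (t u v x) = f u v x).

Definition tmap (U V T U' V' T' : lmodType K) (t : U -> V -> T)
  (t' : U' -> V' -> T') (f : U -> U') (g : V -> V') : T -> T' :=
  tlift t (fun u v => t' (f u) (g v)).

End Generic.

Section TensorSquare.
Variables (K : fieldType) (A : lmodType K) (mul : A -> A -> A).
Variables (T : lmodType K) (tens : A -> A -> T).

Definition tflip : T -> T := tlift tens (fun u v => tens v u).

(* the product of the algebra A (x) A : (a (x) b)(c (x) d) = ac (x) bd *)
Definition tmul (w z : T) : T :=
  tlift tens (fun c d => tmap tens tens (fun a => mul a c) (fun b => mul b d) w) z.

Definition mult := ((T -> T) * (T -> T))%type.

Definition is_multiplier (m : mult) : Prop :=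
  [/\ lin m.1, lin m.2,
      (forall b c, m.1 (tmul b c) = tmul (m.1 b) c),
      (forall b c, m.2 (tmul b c) = tmul b (m.2 c)) &
      (forall b c, tmul b (m.1 c) = tmul (m.2 b) c)].

Definition meq (m n : mult) : Prop :=
  (forall w, m.1 w = n.1 w) /\ (forall w, m.2 w = n.2 w).
Definition madd (m n : mult) : mult := (fun w => m.1 w + n.1 w, fun w => m.2 w + n.2 w).
Definition mprod (m n : mult) : mult := (fun w => m.1 (n.1 w), fun w => n.2 (m.2 w)).

Definition memb (w : T) : mult := (fun z => tmul w z, fun z => tmul z w).

(* the multipliers a (x) 1 and 1 (x) b *)
Definition m_x1 (a : A) : mult :=
  (tmap tens tens (mul a) (fun c => c), tmap tens tens (fun c => mul c a) (fun c => c)).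
Definition m_1x (b : A) : mult :=
  (tmap tens tens (fun c => c) (mul b), tmap tens tens (fun c => c) (fun c => mul c b)).

(* the element of A (x) A represented by a multiplier lying in A (x) A *)
Definition elt (m : mult) : T := epsilon (inhabits 0) (fun w => meq m (memb w)).

Variable Delta : A -> mult.

(* Delta(x)(a (x) 1)  and  (1 (x) a)Delta(x), as elements of A (x) A *)
Definition D_r (x a : A) : T := elt (mprod (Delta x) (m_x1 a)).
Definition D_l (x a : A) : T := elt (mprod (m_1x a) (Delta x)).

Definition T3 : T -> T := tlift tens (fun a b => D_r b a).
Definition T4 : T -> T := tlift tens (fun a b => D_l a b).

Definition is_coproduct (T' : lmodType K) (tens3 : A -> A -> A -> T') : Prop :=
  (forall x, is_multiplier (Delta x))
  /\ (forall (k : K) x y, meq (Delta (k *: x + y))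
        ((fun w => k *: (Delta x).1 w + (Delta y).1 w),
         (fun w => k *: (Delta x).2 w + (Delta y).2 w)))
  /\ (forall a b, exists w, meq (mprod (Delta b) (m_x1 a)) (memb w))
  /\ (forall a b, exists w, meq (mprod (m_1x b) (Delta a)) (memb w))
  (* (b) : (iota (x) T4) o (T3 (x) iota) = (T3 (x) iota) o (iota (x) T4)
     on A (x) A (x) A *)
  /\ (let T3i := tlift3 tens3 (fun a b c =>
                   tlift tens (fun a' b' => tens3 a' b' c) (T3 (tens a b))) in
      let iT4 := tlift3 tens3 (fun a b c =>
                   tlift tens (fun b' c' => tens3 a b' c') (T4 (tens b c))) in
      forall z, iT4 (T3i z) = T3i (iT4 z)).

Definition is_inf_mult_bialgebra (T' : lmodType K) (tens3 : A -> A -> A -> T') : Prop :=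
  is_nd_algebra mul /\ is_coproduct tens3 /\
  forall a b, meq (Delta (mul a b))
                  (madd (mprod (Delta a) (m_1x b)) (mprod (m_x1 a) (Delta b))).

Definition comm (x y : A) : A := mul x y - mul y x.

Definition delta_ (a x : A) : T := D_r x a - tflip (D_r x a).
Definition zeta_ (a x : A) : T := D_l x a - tflip (D_l x a).

Definition dot (x : A) (w : T) : T :=
  tlift tens (fun u v => tens (comm x u) v + tens u (comm x v)) w.

Definition bib_under (a : A) : T -> T :=
  tlift tens (fun x y =>
    (m_x1 x).1 (tflip (D_r y a)) - tflip (D_r y (mul a x))
    + (m_1x y).1 (D_r x a) - D_r x (mul a y)).

Definition bib_over (a : A) : T -> T :=
  tlift tens (fun x y =>
    tflip (D_l y (mul x a)) - tflip ((m_x1 x).2 (D_l y a))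
    + D_l x (mul y a) - (m_x1 y).2 (D_l x a)).

End TensorSquare.

(* Main.v *)
From HB Require Import structures.
Require Import Defs.
From mathcomp Require Import all_boot all_algebra.
From mathcomp Require Import ring.
From mathcomp Require Import boolp classical_sets.
From Stdlib Require Import ClassicalEpsilon FunctionalExtensionality.
Set Implicit Arguments.
Unset Strict Implicit.
Unset Printing Implicit Defensive.
Import GRing.Theory.
Local Open Scope ring_scope.

Section LinLemmas.
Variable K : fieldType.
Implicit Types U V W : lmodType K.

Lemma lin0 U W (f : U -> W) : lin f -> f 0 = 0.
Proof.
move=> H; move: (H 1 0 0); rewrite scaler0 addr0 scale1r => /esym/eqP.
by rewrite -subr_eq0 addrK => /eqP.
Qed.

Lemma linD U W (f : U -> W) : lin f -> forall u v, f (u + v) = f u + f v.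
Proof. by move=> H u v; move: (H 1 u v); rewrite !scale1r. Qed.

Lemma linZ U W (f : U -> W) : lin f -> forall k u, f (k *: u) = k *: f u.
Proof. by move=> H k u; move: (H k u 0); rewrite !addr0 (lin0 H) addr0. Qed.

Lemma linN U W (f : U -> W) : lin f -> forall u, f (- u) = - f u.
Proof. by move=> H u; rewrite -scaleN1r (linZ H) scaleN1r. Qed.

Lemma linB U W (f : U -> W) : lin f -> forall u v, f (u - v) = f u - f v.
Proof. by move=> H u v; rewrite (linD H) (linN H). Qed.

Lemma lin_sum U W (f : U -> W) (I : Type) (s : seq I) (F : I -> U) :
  lin f -> f (\sum_(i <- s) F i) = \sum_(i <- s) f (F i).
Proof.
move=> H; elim: s => [|i s IH]; first by rewrite !big_nil (lin0 H).
by rewrite !big_cons (linD H) IH.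
Qed.

Lemma lin_make U W (f : U -> W) :
  (forall u v, f (u + v) = f u + f v) -> (forall k u, f (k *: u) = k *: f u) -> lin f.
Proof. by move=> HD HZ k u v; rewrite HD HZ. Qed.

Lemma lin_comp U V W (f : V -> W) (g : U -> V) : lin f -> lin g -> lin (fun u => f (g u)).
Proof. by move=> Hf Hg k u v; rewrite Hg Hf. Qed.

Lemma lin_id U : lin (fun u : U => u).
Proof. by []. Qed.

Lemma lin_add U W (f g : U -> W) : lin f -> lin g -> lin (fun u => f u + g u).
Proof.
move=> Hf Hg k u v; rewrite Hf Hg scalerDr.
by rewrite -!addrA; congr (_ + _); rewrite addrCA.
Qed.

Lemma lin_opp U W (f : U -> W) : lin f -> lin (fun u => - f u).
Proof. by move=> Hf k u v; rewrite Hf opprD scalerN. Qed.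

Lemma lin_sub U W (f g : U -> W) : lin f -> lin g -> lin (fun u => f u - g u).
Proof. by move=> Hf Hg; apply: lin_add => //; apply: lin_opp. Qed.

Lemma lin_zero U W : lin (fun _ : U => (0 : W)).
Proof. by move=> k u v; rewrite scaler0 addr0. Qed.

Lemma lin_scal U (k0 : K) : lin (fun u : U => k0 *: u).
Proof. by move=> k u v; rewrite scalerDr !scalerA mulrC. Qed.

End LinLemmas.

Section TensorBasics.
Variables (K : fieldType) (A B T : lmodType K) (tens : A -> B -> T).
Hypothesis HT : is_tensor tens.

Lemma tens_linl v : lin (fun u => tens u v). Proof. by case: HT => [[]]. Qed.
Lemma tens_linr u : lin (tens u). Proof. by case: HT => [[]]. Qed.

Lemma tlift_spec (W : lmodType K) (f : A -> B -> W) : bilin f ->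
  lin (tlift tens f) /\ forall u v, tlift tens f (tens u v) = f u v.
Proof.
move=> Hf; rewrite /tlift; eapply epsilon_spec.
case: HT => _ /(_ W f Hf) [g [Hg1 Hg2 _]]; by exists g.
Qed.

Lemma tlift_lin (W : lmodType K) (f : A -> B -> W) : bilin f -> lin (tlift tens f).
Proof. by move=> /tlift_spec []. Qed.

Lemma tliftE (W : lmodType K) (f : A -> B -> W) : bilin f ->
  forall u v, tlift tens f (tens u v) = f u v.
Proof. by move=> /tlift_spec []. Qed.

Lemma tuniq (W : lmodType K) (g1 g2 : T -> W) : lin g1 -> lin g2 ->
  (forall u v, g1 (tens u v) = g2 (tens u v)) -> forall w, g1 w = g2 w.
Proof.
move=> H1 H2 E w.
have Hf : bilin (fun u v => g2 (tens u v)).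
  split=> [u|v]; apply: lin_comp => //; [exact: tens_linr|exact: tens_linl].
case: HT => _ /(_ W _ Hf) [g [Hg1 Hg2 Hg3]].
by rewrite (Hg3 g1 H1 E) (Hg3 g2 H2 (fun _ _ => erefl)).
Qed.

End TensorBasics.

Lemma lin_scalef (K : fieldType) (U W : lmodType K) (k0 : K) (f : U -> W) :
  lin f -> lin (fun u => k0 *: f u).
Proof. by move=> Hf k u v; rewrite Hf scalerDr !scalerA mulrC. Qed.

Section Functional.
Variables (K : fieldType) (A : lmodType K).
Definition flin (phi : A -> K) := forall k u v, phi (k *: u + v) = k * phi u + phi v.

Variable v : A.
Hypothesis v0 : v != 0.

Record pf := PF { pD : A -> Prop; pfn : A -> K }.
Definition valid (p : pf) :=
  [/\ pD p v, pfn p v = 1,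
   (forall k x y, pD p x -> pD p y -> pD p (k *: x + y)) &
   (forall k x y, pD p x -> pD p y -> pfn p (k *: x + y) = k * pfn p x + pfn p y)].
Definition VT := {p : pf | valid p}.
Definition Rv (p q : VT) : bool :=
  `[< forall x, pD (sval p) x -> pD (sval q) x /\ pfn (sval q) x = pfn (sval p) x >].

Lemma scal_inj (u : A) k k' : u != 0 -> k *: u = k' *: u -> k = k'.
Proof.
move=> u0 E; apply/eqP; rewrite -subr_eq0; apply/negPn/negP => nz.
have : (k - k') *: u = 0 by rewrite scalerBl E subrr.
move=> /(congr1 (fun w => (k - k')^-1 *: w)); rewrite scalerA mulVf // scale1r scaler0.
by move=> /eqP; rewrite (negbTE u0).
Qed.

Definition D0 (x : A) := exists k, x = k *: v.
Definition f0 (x : A) := epsilon (inhabits 0) (fun k => x = k *: v).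
Lemma f0E a : f0 (a *: v) = a.
Proof.
have := epsilon_spec (inhabits (0:K)) (fun k => a *: v = k *: v) (ex_intro _ a erefl).
by move=> /(scal_inj v0) E; rewrite /f0 -E.
Qed.

Lemma valid0 : valid (PF D0 f0).
Proof.
apply: And4 => /=.
- by exists 1; rewrite scale1r.
- by rewrite -{1}[v]scale1r f0E.
- by move=> k _ _ [a ->] [b ->]; exists (k * a + b); rewrite scalerDl scalerA.
- by move=> k _ _ [a ->] [b ->]; rewrite scalerA -scalerDl !f0E.
Qed.

Definition t0 : VT := exist _ _ valid0.

Lemma Rv_refl : forall t, Rv t t.
Proof. by move=> t; apply/asboolP. Qed.

Lemma Rv_trans : forall r s t, Rv r s -> Rv s t -> Rv r t.
Proof.
move=> r s t /asboolP H1 /asboolP H2; apply/asboolP => x /H1 [Hs E1].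
by have [Ht E2] := H2 x Hs; split => //; rewrite E2 E1.
Qed.

Section Chain.
Variable C : set VT.
Hypothesis Ctot : total_on C Rv.
Variable p0 : VT.
Hypothesis Cp0 : C p0.

Definition pick x := epsilon (inhabits t0) (fun p => C p /\ pD (sval p) x).
Definition Dc x := exists p, C p /\ pD (sval p) x.
Definition fc x := pfn (sval (pick x)) x.

Lemma fcE p x : C p -> pD (sval p) x -> fc x = pfn (sval p) x.
Proof.
move=> Cp Dx; have [Cq Dq] : C (pick x) /\ pD (sval (pick x)) x.
  by rewrite /pick; eapply epsilon_spec; exists p.
rewrite /fc; case: (Ctot Cp Cq) => /asboolP H.
  by case: (H x Dx).
by case: (H x Dq).
Qed.

Lemma common p q x y : C p -> C q -> pD (sval p) x -> pD (sval q) y ->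
  exists r, [/\ C r, pD (sval r) x & pD (sval r) y].
Proof.
move=> Cp Cq Dx Dy; case: (Ctot Cp Cq) => /asboolP H.
  by exists q; split => //; case: (H x Dx).
by exists p; split => //; case: (H y Dy).
Qed.

Lemma validc : valid (PF Dc fc).
Proof.
case: p0 Cp0 => [q [qv qf qc ql]] Cq.
apply: And4 => /=.
- by exists (exist _ q (And4 qv qf qc ql)).
- by rewrite (fcE Cq).
- move=> k x y [p [Cp Dx]] [p' [Cp' Dy]].
  have [r [Cr Hx Hy]] := common Cp Cp' Dx Dy.
  exists r; split => //; case: (svalP r) => _ _ rc _; exact: rc.
- move=> k x y [p [Cp Dx]] [p' [Cp' Dy]].
  have [r [Cr Hx Hy]] := common Cp Cp' Dx Dy.
  have Hxy : pD (sval r) (k *: x + y) by case: (svalP r) => _ _ rc _; exact: rc.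
  rewrite (fcE Cr Hx) (fcE Cr Hy) (fcE Cr Hxy).
  by case: (svalP r) => _ _ _ rl; exact: rl.
Qed.
End Chain.

Lemma chain_bound (C : set VT) : total_on C Rv -> exists t, forall s, C s -> Rv s t.
Proof.
move=> Ctot; case: (pselect (exists p, C p)) => [[p0 Cp0]|nC].
  exists (exist _ _ (validc Ctot Cp0)) => s Cs; apply/asboolP => x Dx /=.
  split; first by exists s.
  exact: fcE.
by exists t0 => s Cs; exfalso; apply: nC; exists s.
Qed.

Lemma functional_exists : exists phi : A -> K, flin phi /\ phi v = 1.
Proof.
have [t tmax] := ZL_preorder t0 Rv_refl Rv_trans chain_bound.
have [pv pf pc pl] := svalP t; set p := sval t in pv pf pc pl *.
suff allD : forall u, pD p u.
  by exists (pfn p); split => // k x y; apply: pl; apply: allD.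
move=> u; apply: contrapT => Du.
have D0p : pD p 0 by rewrite -(addNr v) -scaleN1r; apply: (pc).
pose D' x := exists d k, pD p d /\ x = d + k *: u.
pose dec x := epsilon (inhabits ((0 : A), (0 : K))) (fun dk => pD p dk.1 /\ x = dk.1 + dk.2 *: u).
pose f' x := pfn p (dec x).1.
have uniq d d' k k' : pD p d -> pD p d' -> d + k *: u = d' + k' *: u -> d = d'.
  move=> Dd Dd' E; have [ek|nk] := eqVneq k k'; first by move: E; rewrite ek => /addIr.
  exfalso; apply: Du.
  have E2 : (k - k') *: u = d' - d.
    by rewrite scalerBl; apply/eqP; rewrite subr_eq addrAC -(eqP (introT eqP E)) addrC addrA addNr add0r.
  have -> : u = (k - k')^-1 *: (d' - d) + 0.
    by rewrite addr0 -E2 scalerA mulVf ?scale1r // subr_eq0.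
  apply: (pc) => //; rewrite -scaleN1r addrC; exact: pc.
have f'E d k : pD p d -> f' (d + k *: u) = pfn p d.
  move=> Dd; have [] : pD p (dec (d + k *: u)).1 /\ d + k *: u = (dec (d + k *: u)).1 + (dec (d + k *: u)).2 *: u.
    by rewrite /dec; eapply epsilon_spec; exists (d, k).
  by move=> Hd E; rewrite /f' -(uniq _ _ _ _ Dd Hd E).
have v' : valid (PF D' f').
  apply: And4 => /=.
  - by exists v, 0; rewrite scale0r addr0.
  - by rewrite -[v]addr0 -(scale0r u) f'E // scale0r addr0.
  - move=> c _ _ [d1 [k1 [H1 ->]]] [d2 [k2 [H2 ->]]].
    exists (c *: d1 + d2), (c * k1 + k2); split; first exact: pc.
    by rewrite scalerDl scalerDr -scalerA addrACA.
  - move=> c _ _ [d1 [k1 [H1 ->]]] [d2 [k2 [H2 ->]]].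
    have -> : c *: (d1 + k1 *: u) + (d2 + k2 *: u) = (c *: d1 + d2) + (c * k1 + k2) *: u.
      by rewrite scalerDl scalerDr -scalerA addrACA.
    have Hd : pD p (c *: d1 + d2) by apply: (pc).
    by rewrite !f'E // pl.
have R1 : Rv t (exist _ _ v').
  apply/asboolP => x; move=> Dx /=; split; first by exists x, 0; rewrite scale0r addr0.
  by rewrite -[x in f' x]addr0 -(scale0r u) f'E.
move: (tmax _ R1) => /asboolP /(_ u) /= [].
  by exists 0, 1; rewrite add0r scale1r.
by move=> ? _.
Qed.

End Functional.

Section Span.
Variables (K : fieldType) (A B T : lmodType K) (tens : A -> B -> T).
Hypothesis HT : is_tensor tens.

Definition inspan (w : T) := exists s : seq (A * B), w = \sum_(p <- s) tens p.1 p.2.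

Lemma inspan0 : inspan 0. Proof. by exists [::]; rewrite big_nil. Qed.
Lemma inspanD x y : inspan x -> inspan y -> inspan (x + y).
Proof. by move=> [s ->] [t ->]; exists (s ++ t); rewrite big_cat. Qed.
Lemma inspanZ k x : inspan x -> inspan (k *: x).
Proof.
move=> [s ->]; exists (map (fun p => (k *: p.1, p.2)) s).
rewrite big_map scaler_sumr; apply: eq_bigr => p _ /=.
by rewrite (linZ (tens_linl HT _)).
Qed.
Lemma inspanN x : inspan x -> inspan (- x).
Proof. by move=> H; rewrite -scaleN1r; apply: inspanZ. Qed.

Definition ST := {w : T | inspan w}.
Lemma sig_eq (x y : ST) : sval x = sval y -> x = y.
Proof.
case: x => x px; case: y => y py /= E; subst y.
by rewrite (Prop_irrelevance px py).
Qed.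

HB.instance Definition _ := gen_eqMixin ST.
HB.instance Definition _ := gen_choiceMixin ST.

Definition st0 : ST := exist _ 0 inspan0.
Definition stadd (x y : ST) : ST := exist _ _ (inspanD (svalP x) (svalP y)).
Definition stopp (x : ST) : ST := exist _ _ (inspanN (svalP x)).
Definition stscale (k : K) (x : ST) : ST := exist _ _ (inspanZ k (svalP x)).

Lemma staddA : associative stadd. Proof. by move=> x y z; apply: sig_eq; rewrite /= addrA. Qed.
Lemma staddC : commutative stadd. Proof. by move=> x y; apply: sig_eq; rewrite /= addrC. Qed.
Lemma stadd0 : left_id st0 stadd. Proof. by move=> x; apply: sig_eq; rewrite /= add0r. Qed.
Lemma staddN : left_inverse st0 stopp stadd. Proof. by move=> x; apply: sig_eq; rewrite /= addNr. Qed.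

HB.instance Definition _ := GRing.isZmodule.Build ST staddA staddC stadd0 staddN.

Lemma stscaleA a b v : stscale a (stscale b v) = stscale (a * b) v.
Proof. by apply: sig_eq; rewrite /= scalerA. Qed.
Lemma stscale1 : left_id 1 stscale.
Proof. by move=> x; apply: sig_eq; rewrite /= scale1r. Qed.
Lemma stscaleDr : right_distributive stscale +%R.
Proof. by move=> a x y; apply: sig_eq; rewrite /= scalerDr. Qed.
Lemma stscaleDl v : {morph stscale^~ v: a b / a + b}.
Proof. by move=> a b; apply: sig_eq; rewrite /= scalerDl. Qed.

HB.instance Definition _ := GRing.Zmodule_isLmodule.Build K ST stscaleA stscale1 stscaleDr stscaleDl.

Lemma inspan_pure u v : inspan (tens u v).
Proof. by exists [:: (u, v)]; rewrite big_seq1. Qed.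

Lemma tens_span w : inspan w.
Proof.
pose f (u : A) (v : B) : ST := exist _ _ (inspan_pure u v).
have Hf : bilin f.
  split => [u|v] k x y; apply: sig_eq => /=.
    exact: (tens_linr HT).
  exact: (tens_linl HT).
have [Hg Eg] := tlift_spec HT Hf.
have Hs : lin (fun w : T => sval (tlift tens f w)).
  by move=> k x y; rewrite Hg.
have := tuniq HT Hs (@lin_id _ T) (fun u v => f_equal sval (Eg u v)) w.
by move=> <-; apply: svalP.
Qed.

Definition Lpsi (psi : B -> K) : T -> A := tlift tens (fun p q => psi q *: p).

Lemma Lpsi_bilin (psi : B -> K) : flin psi -> bilin (fun (p : A) q => psi q *: p).
Proof.
move=> Hp; split => [p|q] k x y /=.
  by rewrite Hp scalerDl scalerA.
by rewrite scalerDr !scalerA mulrC.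
Qed.

Lemma Lpsi_lin (psi : B -> K) : flin psi -> lin (Lpsi psi).
Proof. by move=> /Lpsi_bilin /(tlift_lin HT). Qed.
Lemma LpsiE (psi : B -> K) : flin psi -> forall u v, Lpsi psi (tens u v) = psi v *: u.
Proof. by move=> /Lpsi_bilin /(tliftE HT). Qed.

Lemma sep w : (forall psi : B -> K, flin psi -> Lpsi psi w = 0) -> w = 0.
Proof.
have [s ->] := tens_span w.
move: {2}(size s) (erefl (size s)) => n; elim: n s => [|n IH] [|[p0 q0] s] //= En Hy;
  try by rewrite big_nil.
case: En => En; rewrite big_cons /=.
have [Eq|nq] := eqVneq q0 0.
  subst q0; have E0 : tens p0 0 = 0 := lin0 (tens_linr HT p0).
  rewrite E0 add0r; apply: IH => // psi Hpsi.
  by rewrite -(Hy psi Hpsi) big_cons /= E0 add0r.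
have [psi0 [Hpsi0 E1]] := functional_exists nq.
have Hp0 : p0 = - \sum_(p <- s) psi0 p.2 *: p.1.
  move: (Hy psi0 Hpsi0); rewrite big_cons (linD (Lpsi_lin Hpsi0)) LpsiE // E1 scale1r.
  rewrite (lin_sum _ _ (Lpsi_lin Hpsi0)).
  under eq_bigr do rewrite LpsiE //.
  by move/eqP; rewrite addr_eq0 => /eqP.
have Es : tens p0 q0 + \sum_(p <- s) tens p.1 p.2 =
          \sum_(p <- map (fun p => (p.1, p.2 - psi0 p.2 *: q0)) s) tens p.1 p.2.
  rewrite big_map /=.
  under [RHS]eq_bigr do rewrite (linB (tens_linr HT _)) (linZ (tens_linr HT _)).
  rewrite sumrB addrC; congr (_ + _).
  rewrite Hp0 (linN (tens_linl HT _)) (lin_sum _ _ (tens_linl HT _)); congr (- _).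
  by apply: eq_bigr => p _; rewrite (linZ (tens_linl HT _)).
rewrite Es; apply: IH; first by rewrite size_map.
by move=> psi Hpsi; rewrite -Es -(Hy psi Hpsi) big_cons.
Qed.

End Span.

Section TmapSec.
Variables (K : fieldType) (A T : lmodType K) (tens : A -> A -> T).
Hypothesis HT : is_tensor tens.

Lemma tmap_bilin (f g : A -> A) : lin f -> lin g -> bilin (fun u v => tens (f u) (g v)).
Proof.
move=> Hf Hg; split => [u|v].
  exact: (lin_comp (tens_linr HT _) Hg).
exact: (lin_comp (tens_linl HT _) Hf).
Qed.

Lemma tmapE (f g : A -> A) : lin f -> lin g -> forall u v,
  tmap tens tens f g (tens u v) = tens (f u) (g v).
Proof. by move=> Hf Hg; apply: (tliftE HT (tmap_bilin Hf Hg)). Qed.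

Lemma tmap_lin (f g : A -> A) : lin f -> lin g -> lin (tmap tens tens f g).
Proof. by move=> Hf Hg; apply: (tlift_lin HT (tmap_bilin Hf Hg)). Qed.

Lemma tflip_bilin : bilin (fun u v : A => tens v u).
Proof. by split => [u|v]; [exact: (tens_linl HT)|exact: (tens_linr HT)]. Qed.
Lemma tflipE u v : tflip tens (tens u v) = tens v u.
Proof. exact: (tliftE HT tflip_bilin). Qed.
Lemma tflip_lin : lin (tflip tens).
Proof. exact: (tlift_lin HT tflip_bilin). Qed.
Lemma tflipK w : tflip tens (tflip tens w) = w.
Proof.
apply: (tuniq HT (lin_comp tflip_lin tflip_lin) (@lin_id _ T)) => u v.
by rewrite !tflipE.
Qed.

Lemma tuniq2 (W : lmodType K) (F G : T -> T -> W) :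
  (forall w, lin (F w)) -> (forall z, lin (F^~ z)) ->
  (forall w, lin (G w)) -> (forall z, lin (G^~ z)) ->
  (forall a b c d, F (tens a b) (tens c d) = G (tens a b) (tens c d)) ->
  forall w z, F w z = G w z.
Proof.
move=> F1 F2 G1 G2 E w z.
have E1 a b z' : F (tens a b) z' = G (tens a b) z'.
  by apply: (tuniq HT (F1 _) (G1 _)) => c d; apply: E.
by apply: (tuniq HT (F2 z) (G2 z)) => a b; apply: E1.
Qed.

End TmapSec.

Section AlgSec.
Variables (K : fieldType) (A T : lmodType K) (mul : A -> A -> A) (tens : A -> A -> T).
Hypothesis HA : is_nd_algebra mul.
Hypothesis HT : is_tensor tens.

Lemma mul_linr a : lin (mul a). Proof. by case: HA => [[]]. Qed.
Lemma mul_linl b : lin (fun a => mul a b). Proof. by case: HA => [[]]. Qed.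
Lemma mulA' a b c : mul (mul a b) c = mul a (mul b c). Proof. by case: HA => _ [H _]; apply: H. Qed.
Lemma nd1 a : (forall b, mul a b = 0) -> a = 0. Proof. by case: HA => _ [_ [H _]]; apply: H. Qed.
Lemma nd2 a : (forall b, mul b a = 0) -> a = 0. Proof. by case: HA => _ [_ [_ H]]; apply: H. Qed.

Lemma tmul_inner_bilin w :
  bilin (fun c d => tmap tens tens (fun a => mul a c) (fun b => mul b d) w).
Proof.
split => [c|d] k x y.
- move: w; apply: (tuniq HT).
  + exact: (tmap_lin HT (mul_linl _) (mul_linl _)).
  + apply: lin_add; last exact: (tmap_lin HT (mul_linl _) (mul_linl _)).
    exact: (lin_scalef _ (tmap_lin HT (mul_linl _) (mul_linl _))).
  + move=> u v; rewrite !(tmapE HT (mul_linl _) (mul_linl _)).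
    by rewrite (mul_linr v) (tens_linr HT).
- move: w; apply: (tuniq HT).
  + exact: (tmap_lin HT (mul_linl _) (mul_linl _)).
  + apply: lin_add; last exact: (tmap_lin HT (mul_linl _) (mul_linl _)).
    exact: (lin_scalef _ (tmap_lin HT (mul_linl _) (mul_linl _))).
  + move=> u v; rewrite !(tmapE HT (mul_linl _) (mul_linl _)).
    by rewrite (mul_linr u) (tens_linl HT).
Qed.

Lemma tmul_linr w : lin (tmul mul tens w).
Proof. exact: (tlift_lin HT (tmul_inner_bilin w)). Qed.

Lemma tmulE a b c d : tmul mul tens (tens a b) (tens c d) = tens (mul a c) (mul b d).
Proof.
rewrite /tmul (tliftE HT (tmul_inner_bilin _)).
exact: (tmapE HT (mul_linl _) (mul_linl _)).
Qed.

Lemma tmul_pure_linl c d : lin (fun w => tmul mul tens w (tens c d)).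
Proof.
move=> k x y; rewrite /tmul !(tliftE HT (tmul_inner_bilin _)).
exact: (tmap_lin HT (mul_linl _) (mul_linl _)).
Qed.

Lemma tmul_linl z : lin (fun w => tmul mul tens w z).
Proof.
move=> k x y; move: z; apply: (tuniq HT).
- exact: tmul_linr.
- apply: lin_add; last exact: tmul_linr.
  exact: (lin_scalef _ (tmul_linr _)).
- by move=> c d; apply: tmul_pure_linl.
Qed.

Lemma flin_comp (chi : A -> K) (f : A -> A) : flin chi -> lin f -> flin (fun x => chi (f x)).
Proof. by move=> Hc Hf k u v; rewrite Hf Hc. Qed.

Definition L' (psi : A -> K) : T -> A := tlift tens (fun p q => psi p *: q).
Lemma L'_bilin (psi : A -> K) : flin psi -> bilin (fun (p : A) (q : A) => psi p *: q).
Proof.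
move=> Hp; split => [p|q] k x y /=.
  by rewrite scalerDr !scalerA mulrC.
by rewrite Hp scalerDl scalerA.
Qed.
Lemma L'_lin psi : flin psi -> lin (L' psi).
Proof. by move=> /L'_bilin /(tlift_lin HT). Qed.
Lemma L'E psi : flin psi -> forall u v, L' psi (tens u v) = psi u *: v.
Proof. by move=> /L'_bilin /(tliftE HT). Qed.

Lemma L'_flip psi : flin psi -> forall w, Lpsi tens psi (tflip tens w) = L' psi w.
Proof.
move=> Hp; apply: (tuniq HT).
- exact: (lin_comp (Lpsi_lin HT Hp) (tflip_lin HT)).
- exact: L'_lin.
- by move=> u v; rewrite tflipE // LpsiE // L'E.
Qed.

Lemma sep' w : (forall psi : A -> K, flin psi -> L' psi w = 0) -> w = 0.
Proof.
move=> H; have : tflip tens w = 0.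
  by apply: (sep HT) => psi Hp; rewrite L'_flip // H.
by move=> E; rewrite -(tflipK HT w) E (lin0 (tflip_lin HT)).
Qed.

Definition Rd (d : A) := tmap tens tens (fun x => x) (fun x => mul x d).
Definition R'd (d : A) := tmap tens tens (fun x => x) (mul d).

Lemma Rd_lin d : lin (Rd d). Proof. exact: (tmap_lin HT (@lin_id _ _) (mul_linl _)). Qed.
Lemma RdE d u v : Rd d (tens u v) = tens u (mul v d).
Proof. exact: (tmapE HT (@lin_id _ _) (mul_linl _)). Qed.
Lemma R'd_lin d : lin (R'd d). Proof. exact: (tmap_lin HT (@lin_id _ _) (mul_linr _)). Qed.
Lemma R'dE d u v : R'd d (tens u v) = tens u (mul d v).
Proof. exact: (tmapE HT (@lin_id _ _) (mul_linr _)). Qed.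

Lemma ndT_left w : (forall c d, tmul mul tens w (tens c d) = 0) -> w = 0.
Proof.
move=> H.
have E1 chi (Hc : flin chi) c d :
    mul (Lpsi tens chi (Rd d w)) c = Lpsi tens chi (tmul mul tens w (tens c d)).
  move: w {H}; apply: (tuniq HT).
  - exact: (lin_comp (mul_linl _) (lin_comp (Lpsi_lin HT Hc) (Rd_lin _))).
  - exact: (lin_comp (Lpsi_lin HT Hc) (tmul_linl _)).
  - move=> p q; rewrite RdE tmulE !(LpsiE HT Hc).
    exact: (linZ (mul_linl _)).
have E2 d : Rd d w = 0.
  apply: (sep HT) => chi Hc; apply: nd1 => c.
  by rewrite E1 // H (lin0 (Lpsi_lin HT Hc)).
have E3 psi (Hp : flin psi) d : mul (L' psi w) d = L' psi (Rd d w).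
  move: w {H E1 E2}; apply: (tuniq HT).
  - exact: (lin_comp (mul_linl _) (L'_lin Hp)).
  - exact: (lin_comp (L'_lin Hp) (Rd_lin _)).
  - move=> p q; rewrite RdE !(L'E Hp).
    exact: (linZ (mul_linl _)).
apply: sep' => psi Hp; apply: nd1 => d.
by rewrite E3 // E2 (lin0 (L'_lin Hp)).
Qed.

Lemma ndT_right w : (forall c d, tmul mul tens (tens c d) w = 0) -> w = 0.
Proof.
move=> H.
have E1 chi (Hc : flin chi) c d :
    mul c (Lpsi tens chi (R'd d w)) = Lpsi tens chi (tmul mul tens (tens c d) w).
  move: w {H}; apply: (tuniq HT).
  - exact: (lin_comp (mul_linr _) (lin_comp (Lpsi_lin HT Hc) (R'd_lin _))).
  - exact: (lin_comp (Lpsi_lin HT Hc) (tmul_linr _)).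
  - move=> p q; rewrite R'dE tmulE !(LpsiE HT Hc).
    exact: (linZ (mul_linr _)).
have E2 d : R'd d w = 0.
  apply: (sep HT) => chi Hc; apply: nd2 => c.
  by rewrite E1 // H (lin0 (Lpsi_lin HT Hc)).
have E3 psi (Hp : flin psi) d : mul d (L' psi w) = L' psi (R'd d w).
  move: w {H E1 E2}; apply: (tuniq HT).
  - exact: (lin_comp (mul_linr _) (L'_lin Hp)).
  - exact: (lin_comp (L'_lin Hp) (R'd_lin _)).
  - move=> p q; rewrite R'dE !(L'E Hp).
    exact: (linZ (mul_linr _)).
apply: sep' => psi Hp; apply: nd2 => d.
by rewrite E3 // E2 (lin0 (L'_lin Hp)).
Qed.

Lemma memb_inj (m : mult T) w1 w2 :
  meq m (memb mul tens w1) -> meq m (memb mul tens w2) -> w1 = w2.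
Proof.
move=> [E1 _] [E2 _]; apply/eqP; rewrite -subr_eq0; apply/eqP.
apply: ndT_left => c d.
rewrite (linB (tmul_linl _)).
by move: (E1 (tens c d)) (E2 (tens c d)) => /= <- <-; rewrite subrr.
Qed.

Lemma eltE (m : mult T) w : meq m (memb mul tens w) -> elt mul tens m = w.
Proof.
move=> Hw; apply: (memb_inj _ Hw); rewrite /elt.
by eapply epsilon_spec; exists w.
Qed.

End AlgSec.

Lemma zmod_by_poly (V : zmodType) (a : nat -> V) (n : nat) :
  exists e : {poly int} -> V,
    [/\ forall p q, e (p + q) = e p + e q, forall p, e (- p) = - e p &
        forall j, (j < n)%N -> e 'X^j = a j].
Proof.
exists (fun p => \sum_(i < n) a i *~ p`_i); split.
- by move=> p q; rewrite -big_split; apply: eq_bigr => i _; rewrite coefD mulrzDr.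
- by move=> p; rewrite -sumrN; apply: eq_bigr => i _; rewrite coefN mulrNz.
- move=> j jn; rewrite (bigD1 (Ordinal jn)) //= coefXn eqxx mulr1z big1 ?addr0 // => i /eqP ij.
  rewrite coefXn; case: eqP => [E|_]; last by rewrite mulr0z.
  by exfalso; apply: ij; apply: val_inj.
Qed.

Lemma group_id (V : zmodType) (lxdy rxdy mxdy nxdy lxfy rxfy mxfy nxfy
   lydx rydx mydx nydx lyfx ryfx myfx nyfx : V) :
  (nydx + lxdy - (nxdy + lydx)) - ((ryfx + mxfy) - (rxfy + myfx))
  = ((lxdy - rxdy + mxdy - nxdy) - (lxfy - rxfy + mxfy - nxfy))
    - ((lydx - rydx + mydx - nydx) - (lyfx - ryfx + myfx - nyfx))
    + (lxfy - nxfy + mydx - rydx) - (lyfx - nyfx + mxdy - rxdy).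
Proof.
pose a := [:: lxdy; rxdy; mxdy; nxdy; lxfy; rxfy; mxfy; nxfy;
              lydx; rydx; mydx; nydx; lyfx; ryfx; myfx; nyfx].
have [e [eD eN eX]] := zmod_by_poly (fun i => nth 0 a i) 16.
have eB p q : e (p - q) = e p - e q by rewrite eD eN.
rewrite -[lxdy](eX 0%N) // -[rxdy](eX 1%N) // -[mxdy](eX 2%N) // -[nxdy](eX 3%N) //.
rewrite -[lxfy](eX 4%N) // -[rxfy](eX 5%N) // -[mxfy](eX 6%N) // -[nxfy](eX 7%N) //.
rewrite -[lydx](eX 8%N) // -[rydx](eX 9%N) // -[mydx](eX 10%N) // -[nydx](eX 11%N) //.
rewrite -[lyfx](eX 12%N) // -[ryfx](eX 13%N) // -[myfx](eX 14%N) // -[nyfx](eX 15%N) //.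
rewrite -!eB -!eD -!eB -!eD -!eB; congr (e _); ring.
Qed.

Section Main.
Variables (K : fieldType) (A T : lmodType K) (mul : A -> A -> A) (tens : A -> A -> T).
Hypothesis HA : is_nd_algebra mul.
Hypothesis HT : is_tensor tens.

Definition opL x := tmap tens tens (mul x) (fun c => c).
Definition opR x := tmap tens tens (fun c => mul c x) (fun c => c).
Definition opM x := tmap tens tens (fun c => c) (mul x).
Definition opN x := tmap tens tens (fun c => c) (fun c => mul c x).
Local Notation f := (tflip tens).
Local Notation tm := (tmul mul tens).

Lemma opL_lin x : lin (opL x). Proof. exact: (tmap_lin HT (mul_linr HA _) (@lin_id _ _)). Qed.
Lemma opR_lin x : lin (opR x). Proof. exact: (tmap_lin HT (mul_linl HA _) (@lin_id _ _)). Qed.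
Lemma opM_lin x : lin (opM x). Proof. exact: (tmap_lin HT (@lin_id _ _) (mul_linr HA _)). Qed.
Lemma opN_lin x : lin (opN x). Proof. exact: (tmap_lin HT (@lin_id _ _) (mul_linl HA _)). Qed.
Lemma opLE x u v : opL x (tens u v) = tens (mul x u) v.
Proof. exact: (tmapE HT (mul_linr HA _) (@lin_id _ _)). Qed.
Lemma opRE x u v : opR x (tens u v) = tens (mul u x) v.
Proof. exact: (tmapE HT (mul_linl HA _) (@lin_id _ _)). Qed.
Lemma opME x u v : opM x (tens u v) = tens u (mul x v).
Proof. exact: (tmapE HT (@lin_id _ _) (mul_linr HA _)). Qed.
Lemma opNE x u v : opN x (tens u v) = tens u (mul v x).
Proof. exact: (tmapE HT (@lin_id _ _) (mul_linl HA _)). Qed.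

Ltac lins := repeat first [ exact: opL_lin | exact: opR_lin | exact: opM_lin | exact: opN_lin
  | exact: (tflip_lin HT) | exact: (tmul_linr HA HT) | exact: (tmul_linl HA HT)
  | apply: lin_comp | apply: lin_add | apply: lin_sub | apply: lin_scalef ].

Lemma opL_linx w : lin (fun x => opL x w).
Proof.
move=> k x y; move: w; apply: (tuniq HT); first exact: opL_lin.
  by apply: lin_add; [apply: lin_scalef|]; apply: opL_lin.
by move=> u v; rewrite !opLE (mul_linl HA) (tens_linl HT).
Qed.
Lemma opR_linx w : lin (fun x => opR x w).
Proof.
move=> k x y; move: w; apply: (tuniq HT); first exact: opR_lin.
  by apply: lin_add; [apply: lin_scalef|]; apply: opR_lin.
by move=> u v; rewrite !opRE (mul_linr HA) (tens_linl HT).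
Qed.
Lemma opM_linx w : lin (fun x => opM x w).
Proof.
move=> k x y; move: w; apply: (tuniq HT); first exact: opM_lin.
  by apply: lin_add; [apply: lin_scalef|]; apply: opM_lin.
by move=> u v; rewrite !opME (mul_linl HA) (tens_linr HT).
Qed.
Lemma opN_linx w : lin (fun x => opN x w).
Proof.
move=> k x y; move: w; apply: (tuniq HT); first exact: opN_lin.
  by apply: lin_add; [apply: lin_scalef|]; apply: opN_lin.
by move=> u v; rewrite !opNE (mul_linr HA) (tens_linr HT).
Qed.

Lemma f_opL x w : f (opL x w) = opM x (f w).
Proof.
move: w; apply: (tuniq HT (lin_comp (tflip_lin HT) (opL_lin x)) (lin_comp (opM_lin x) (tflip_lin HT))).
by move=> u v; rewrite opLE !(tflipE HT) opME.
Qed.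
Lemma f_opM x w : f (opM x w) = opL x (f w).
Proof.
move: w; apply: (tuniq HT (lin_comp (tflip_lin HT) (opM_lin x)) (lin_comp (opL_lin x) (tflip_lin HT))).
by move=> u v; rewrite opME !(tflipE HT) opLE.
Qed.
Lemma f_opR x w : f (opR x w) = opN x (f w).
Proof.
move: w; apply: (tuniq HT (lin_comp (tflip_lin HT) (opR_lin x)) (lin_comp (opN_lin x) (tflip_lin HT))).
by move=> u v; rewrite opRE !(tflipE HT) opNE.
Qed.
Lemma f_opN x w : f (opN x w) = opR x (f w).
Proof.
move: w; apply: (tuniq HT (lin_comp (tflip_lin HT) (opN_lin x)) (lin_comp (opR_lin x) (tflip_lin HT))).
by move=> u v; rewrite opNE !(tflipE HT) opRE.
Qed.


Lemma K2a y w z : tm w (opM y z) = tm (opN y w) z.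
Proof.
move: w z; apply: (tuniq2 HT (F := fun w z => tm w (opM y z)) (G := fun w z => tm (opN y w) z)).
- by move=> w; apply: lin_comp; [apply: (tmul_linr HA HT)|apply: opM_lin].
- by move=> z; apply: (tmul_linl HA HT).
- by move=> w; apply: (tmul_linr HA HT).
- by move=> z; apply: (lin_comp (tmul_linl HA HT z) (opN_lin y)).
- by move=> a b c d; rewrite opME opNE !(tmulE HA HT) (mulA' HA).
Qed.
Lemma K2b x w z : tm w (opL x z) = tm (opR x w) z.
Proof.
move: w z; apply: (tuniq2 HT (F := fun w z => tm w (opL x z)) (G := fun w z => tm (opR x w) z)).
- by move=> w; apply: lin_comp; [apply: (tmul_linr HA HT)|apply: opL_lin].
- by move=> z; apply: (tmul_linl HA HT).
- by move=> w; apply: (tmul_linr HA HT).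
- by move=> z; apply: (lin_comp (tmul_linl HA HT z) (opR_lin x)).
- by move=> a b c d; rewrite opLE opRE !(tmulE HA HT) (mulA' HA).
Qed.
Lemma K3a x w z : opL x (tm w z) = tm (opL x w) z.
Proof.
move: w z; apply: (tuniq2 HT (F := fun w z => opL x (tm w z)) (G := fun w z => tm (opL x w) z)).
- by move=> w; apply: lin_comp; [apply: opL_lin|apply: (tmul_linr HA HT)].
- by move=> z; apply: (lin_comp (opL_lin x) (tmul_linl HA HT z)).
- by move=> w; apply: (tmul_linr HA HT).
- by move=> z; apply: (lin_comp (tmul_linl HA HT z) (opL_lin x)).
- by move=> a b c d; rewrite opLE !(tmulE HA HT) opLE (mulA' HA).
Qed.
Lemma K3b y z w : opN y (tm z w) = tm z (opN y w).
Proof.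
move: z w; apply: (tuniq2 HT (F := fun z w => opN y (tm z w)) (G := fun z w => tm z (opN y w))).
- by move=> z; apply: lin_comp; [apply: opN_lin|apply: (tmul_linr HA HT)].
- by move=> w; apply: (lin_comp (opN_lin y) (tmul_linl HA HT w)).
- by move=> z; apply: lin_comp; [apply: (tmul_linr HA HT)|apply: opN_lin].
- by move=> w; apply: (tmul_linl HA HT).
- by move=> a b c d; rewrite opNE !(tmulE HA HT) opNE (mulA' HA).
Qed.
Lemma K4a y a z : opM y (opL a z) = opL a (opM y z).
Proof.
move: z; apply: (tuniq HT (lin_comp (opM_lin y) (opL_lin a)) (lin_comp (opL_lin a) (opM_lin y))).
by move=> u v; rewrite opLE !opME opLE.
Qed.
Lemma K4b x a z : opR x (opN a z) = opN a (opR x z).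
Proof.
move: z; apply: (tuniq HT (lin_comp (opR_lin x) (opN_lin a)) (lin_comp (opN_lin a) (opR_lin x))).
by move=> u v; rewrite opNE !opRE opNE.
Qed.
Lemma K5a a x z : opL (mul a x) z = opL a (opL x z).
Proof.
move: z; apply: (tuniq HT (opL_lin _) (lin_comp (opL_lin a) (opL_lin x))).
by move=> u v; rewrite !opLE (mulA' HA).
Qed.
Lemma K5b x a z : opN (mul x a) z = opN a (opN x z).
Proof.
move: z; apply: (tuniq HT (opN_lin _) (lin_comp (opN_lin a) (opN_lin x))).
by move=> u v; rewrite !opNE (mulA' HA).
Qed.

Lemma eq_left w1 w2 : (forall z, tm w1 z = tm w2 z) -> w1 = w2.
Proof.
move=> E; apply/eqP; rewrite -subr_eq0; apply/eqP; apply: (ndT_left HA HT) => c d.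
have := linB (tmul_linl HA HT (tens c d)) w1 w2; move=> /= ->.
by rewrite E subrr.
Qed.
Lemma eq_right w1 w2 : (forall z, tm z w1 = tm z w2) -> w1 = w2.
Proof.
move=> E; apply/eqP; rewrite -subr_eq0; apply/eqP; apply: (ndT_right HA HT) => c d.
by rewrite (linB (tmul_linr HA HT _)) E subrr.
Qed.


Variables (T' : lmodType K) (tens3 : A -> A -> A -> T') (Delta : A -> mult T).
Hypothesis H : is_inf_mult_bialgebra mul tens Delta tens3.

Local Notation Dr := (D_r mul tens Delta).
Local Notation Dl := (D_l mul tens Delta).

Lemma HDlin k x y : meq (Delta (k *: x + y))
        ((fun w => k *: (Delta x).1 w + (Delta y).1 w),
         (fun w => k *: (Delta x).2 w + (Delta y).2 w)).
Proof. by case: H => _ [[_ [Hl _]] _]; apply: Hl. Qed.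
Lemma Hex_r a b : exists w, meq (mprod (Delta b) (m_x1 mul tens a)) (memb mul tens w).
Proof. by case: H => _ [[_ [_ [He _]]] _]; apply: He. Qed.
Lemma Hex_l a b : exists w, meq (mprod (m_1x mul tens b) (Delta a)) (memb mul tens w).
Proof. by case: H => _ [[_ [_ [_ [He _]]]] _]; apply: He. Qed.
Lemma HLeib a b : meq (Delta (mul a b))
   (madd (mprod (Delta a) (m_1x mul tens b)) (mprod (m_x1 mul tens a) (Delta b))).
Proof. by case: H => _ [_ He]; apply: He. Qed.

Lemma Dr_char x a z : (Delta x).1 (opL a z) = tm (Dr x a) z.
Proof.
have [w Hw] := Hex_r a x.
have -> : Dr x a = w by rewrite /D_r (eltE HA HT Hw).
exact: (Hw.1 z).
Qed.
Lemma Dl_char x a z : (Delta x).2 (opN a z) = tm z (Dl x a).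
Proof.
have [w Hw] := Hex_l x a.
have -> : Dl x a = w by rewrite /D_l (eltE HA HT Hw).
exact: (Hw.2 z).
Qed.

Lemma Dr_lin a : lin (fun x => Dr x a).
Proof.
move=> k x y; apply: eq_left => z.
have := tmul_linl HA HT z k (Dr x a) (Dr y a); move=> /= ->.
by rewrite -!Dr_char ((HDlin k x y).1 (opL a z)).
Qed.
Lemma Dl_lin a : lin (fun x => Dl x a).
Proof.
move=> k x y; apply: eq_right => z.
rewrite (tmul_linr HA HT z k (Dl x a) (Dl y a)).
by rewrite -!Dl_char ((HDlin k x y).2 (opN a z)).
Qed.

Lemma Dr_mul x y a : Dr (mul x y) a = opN y (Dr x a) + opL x (Dr y a).
Proof.
apply: eq_left => z.
have := linD (tmul_linl HA HT z) (opN y (Dr x a)) (opL x (Dr y a)); move=> /= ->.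
rewrite -Dr_char ((HLeib x y).1 (opL a z)) /=.
rewrite -/(opM y (opL a z)) -/(opL x _) K4a Dr_char Dr_char K2a K3a.
done.
Qed.

Lemma Dr_ax y a x : Dr y (mul a x) = opR x (Dr y a).
Proof.
by apply: eq_left => z; rewrite -Dr_char K5a Dr_char K2b.
Qed.

Lemma Dl_mul x y a : Dl (mul x y) a = opN y (Dl x a) + opL x (Dl y a).
Proof.
apply: eq_right => z.
rewrite (linD (tmul_linr HA HT z)).
rewrite -Dl_char ((HLeib x y).2 (opN a z)) /=.
rewrite -/(opN y _) -/(opR x (opN a z)) K4b !Dl_char K3b -K2b.
done.
Qed.

Lemma Dl_xa y x a : Dl y (mul x a) = opM x (Dl y a).
Proof.
by apply: eq_right => z; rewrite -Dl_char K5b Dl_char K2a.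
Qed.


Lemma comm_lin x : lin (comm mul x).
Proof. exact: (lin_sub (mul_linr HA x) (mul_linl HA x)). Qed.
Lemma comm_linl y : lin (fun x => comm mul x y).
Proof. exact: (lin_sub (mul_linl HA y) (mul_linr HA y)). Qed.

Lemma dot_bilin x : bilin (fun u v => tens (comm mul x u) v + tens u (comm mul x v)).
Proof.
split => [u|v].
  exact: (lin_add (tens_linr HT _) (lin_comp (tens_linr HT u) (comm_lin x))).
exact: (lin_add (lin_comp (tens_linl HT v) (comm_lin x)) (tens_linl HT _)).
Qed.
Lemma dot_lin x : lin (dot mul tens x).
Proof. exact: (tlift_lin HT (dot_bilin x)). Qed.
Lemma dotE x w : dot mul tens x w = opL x w - opR x w + opM x w - opN x w.
Proof.
move: w; apply: (tuniq HT (dot_lin x)).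
  exact: (lin_sub (lin_add (lin_sub (opL_lin x) (opR_lin x)) (opM_lin x)) (opN_lin x)).
move=> u v; rewrite /dot (tliftE HT (dot_bilin x)) opLE opRE opME opNE /comm.
by rewrite (linB (tens_linl HT v)) (linB (tens_linr HT u)) addrA.
Qed.

Definition bibN (D : A -> T) x y :=
  opL x (f (D y)) - opN x (f (D y)) + opM y (D x) - opR y (D x).

Lemma bibN_bilin D : lin D -> bilin (bibN D).
Proof.
move=> HD; split => [x|y].
  exact: (lin_sub (lin_add (lin_sub (lin_comp (opL_lin x) (lin_comp (tflip_lin HT) HD))
            (lin_comp (opN_lin x) (lin_comp (tflip_lin HT) HD))) (opM_linx _)) (opR_linx _)).
exact: (lin_sub (lin_add (lin_sub (opL_linx _) (opN_linx _)) (lin_comp (opM_lin y) HD))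
          (lin_comp (opR_lin y) HD)).
Qed.

Lemma key (D : A -> T) : lin D -> (forall x y, D (mul x y) = opN y (D x) + opL x (D y)) ->
  forall x y,
  D (comm mul x y) - f (D (comm mul x y)) =
  dot mul tens x (D y - f (D y)) - dot mul tens y (D x - f (D x))
  + tlift tens (bibN D) (tens x y) - tlift tens (bibN D) (tens y x).
Proof.
move=> HD Dm x y.
rewrite !(tliftE HT (bibN_bilin HD)) /bibN.
rewrite /comm (linB HD) !Dm.
rewrite (linB (tflip_lin HT)) !(linD (tflip_lin HT)) !f_opN !f_opL.
rewrite !(linB (dot_lin _)) !dotE.
exact: group_id.
Qed.

Lemma bib_under_eq a : bib_under mul tens Delta a = tlift tens (bibN (fun x => Dr x a)).
Proof.
rewrite /bib_under; congr (tlift tens _).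
apply: functional_extensionality => x0; apply: functional_extensionality => y0.
by rewrite /bibN !Dr_ax f_opR.
Qed.
Lemma bib_over_eq a : bib_over mul tens Delta a = tlift tens (bibN (fun x => Dl x a)).
Proof.
rewrite /bib_over; congr (tlift tens _).
apply: functional_extensionality => x0; apply: functional_extensionality => y0.
by rewrite /bibN !Dl_xa f_opM f_opR.
Qed.

Lemma main_eqs a x y :
    delta_ mul tens Delta a (comm mul x y)
      = dot mul tens x (delta_ mul tens Delta a y)
        - dot mul tens y (delta_ mul tens Delta a x)
        + bib_under mul tens Delta a (tens x y)
        - bib_under mul tens Delta a (tens y x)
    /\
    zeta_ mul tens Delta a (comm mul x y)
      = dot mul tens x (zeta_ mul tens Delta a y)
        - dot mul tens y (zeta_ mul tens Delta a x)
        + bib_over mul tens Delta a (tens x y)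
        - bib_over mul tens Delta a (tens y x).
Proof.
split.
  rewrite bib_under_eq /delta_.
  exact: (key (Dr_lin a) (fun x y => Dr_mul x y a)).
rewrite bib_over_eq /zeta_.
exact: (key (Dl_lin a) (fun x y => Dl_mul x y a)).
Qed.

End Main.

Unset Implicit Arguments.

Theorem proposition3p2
  (A : lmodType CC) (mul : A -> A -> A)
  (T : lmodType CC) (tens : A -> A -> T) (HT : is_tensor tens)
  (T' : lmodType CC) (tens3 : A -> A -> A -> T') (HT' : is_tensor3 tens3)
  (Delta : A -> mult T)
  (H : is_inf_mult_bialgebra mul tens Delta tens3) :
  forall a x y : A,
    delta_ mul tens Delta a (comm mul x y)
      = dot mul tens x (delta_ mul tens Delta a y)
        - dot mul tens y (delta_ mul tens Delta a x)
        + bib_under mul tens Delta a (tens x y)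
        - bib_under mul tens Delta a (tens y x)
    /\
    zeta_ mul tens Delta a (comm mul x y)
      = dot mul tens x (zeta_ mul tens Delta a y)
        - dot mul tens y (zeta_ mul tens Delta a x)
        + bib_over mul tens Delta a (tens x y)
        - bib_over mul tens Delta a (tens y x).
Proof.
move=> a x y; exact: (main_eqs H.1 HT H a x y).
Qed.
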